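(* Let $h:\mathbb{R}\to[0,+\infty)$ be a continuous super-multiplicative function (i.e. $h(xy)\ge h(x)h(y)$ for all $x,y\in\mathbb{R}$) such that $h(t)\ge t$ for all $t$. Let $f:(a,b)\to\mathbb{R}$ be a Lebesgue measurable function which is $h$-mid-convex, i.e. $$f\Big(\frac{x+y}{2}\Big)\le h\Big(\frac12\Big)\big(f(x)+f(y)\big)\quad\text{for all } x,y\in(a,b).$$ Then $f$ is continuous on $(a,b)$. *)

(* Defs.v *)
From HB Require Import structures.
From mathcomp Require Import all_boot all_order all_algebra.
From mathcomp Require Import all_classical all_reals all_analysis.
Set Implicit Arguments. Unset Strict Implicit. Unset Printing Implicit Defensive.
Import Order.TTheory GRing.Theory Num.Theory.
Import numFieldNormedType.Exports.
Local Open Scope classical_set_scope.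
Local Open Scope ring_scope.

(* The real line equipped with the Lebesgue (i.e. completed, Caratheodory)
   sigma-algebra: the domain type of MathComp-Analysis' completed Lebesgue
   measure. Its carrier is (convertibly) R. *)
Definition lebesgue_line (R : realType) : measurableType _ :=
  caratheodory_type (wlength (R:=R) idfun)^*%mu.

Definition lebesgue_measurable_on (R : realType) (D : set R) (f : R -> R) :=
  @measurable_fun _ _ (lebesgue_line R) R (D : set (lebesgue_line R))
    (f : lebesgue_line R -> R).

Definition h_midconvex (R : realType) (h : R -> R) (a b : R) (f : R -> R) :=
  forall x y, x \in `]a, b[ -> y \in `]a, b[ ->
    f ((x + y) / 2) <= h (2^-1) * (f x + f y).

(* Main.v *)
Require Import Defs.
From HB Require Import structures.
From mathcomp Require Import all_boot all_order all_algebra.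
From mathcomp Require Import all_classical all_reals all_analysis.
From mathcomp Require Import measurable_realfun.
From mathcomp Require Import lra ring.
Import Order.TTheory GRing.Theory Num.Theory.
Import numFieldNormedType.Exports.
Local Open Scope classical_set_scope.
Local Open Scope ring_scope.

Section S.
Context {R : realType}.
Local Notation l := (@wlength R idfun).

Lemma wlength_oo (u v : R) : l `]u, v[ = if u < v then (v - u)%:E else 0%E.
Proof.
by rewrite wlength_itv /= lte_fin.
Qed.

Lemma refl_le (c : R) (A : set R) :
  ((l^* [set y : R | A (c - y)%R])%mu <= (l^* A)%mu)%E.
Proof.
rewrite !outer_measure_open_itv_cover.
apply: le_ereal_inf_tmp => _ [F [Fo AF] <-].
pose G k := [set y | F k (c - y)].
have GE k : G k = `](c - (sval (cid (Fo k))).2), (c - (sval (cid (Fo k))).1)[%classic.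
  rewrite /G; case: cid => -[u v] /= ->.
  by apply/seteqP; split => y /=; rewrite !in_itv /= => /andP[h1 h2]; apply/andP; split; lra.
apply: ereal_inf_lbound; exists G.
  split; first by move=> k; exists (c - (sval (cid (Fo k))).2, c - (sval (cid (Fo k))).1); exact: GE.
  move=> y /= Ay; have [k _ Fk] := AF _ Ay; exists k => //; rewrite /G.
apply: eq_eseriesr => k _.
rewrite GE; case: cid => -[u v] /= ->.
rewrite !wlength_oo.
have -> : (c - u - (c - v) = v - u)%R by ring.
by rewrite ltrD2l ltrN2.
Qed.
Lemma cont_of_bound (f : R -> R) (x0 d M : R) :
  0 < d ->
  (forall u v, `|u - x0| <= d -> `|v - x0| <= d -> f ((u + v) / 2) <= 2^-1 * (f u + f v)) ->
  (forall y, `|y - x0| <= d -> f y <= M) ->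
  {for x0, continuous f}.
Proof.
move=> d0 mc bd.
set C := M - f x0.
have C0 : 0 <= C by rewrite subr_ge0 bd // subrr normr0 ltW.
pose k n := (2^-1 : R) ^+ n.
have kS n : k n.+1 = k n * 2^-1 by rewrite /k exprSr.
have k0 n : 0 < k n by rewrite /k exprn_gt0 // invr_gt0.
have k1 n : k n <= 1 by rewrite /k exprn_ile1 // ?invr_ge0 ?invf_le1 ?ler1n.
have up n : forall s, `|s| <= d * k n -> f (x0 + s) - f x0 <= C * k n.
  elim: n => [|n IH] s hs.
    rewrite /k expr0 mulr1 in hs *.
    have := bd (x0 + s); rewrite addrAC subrr add0r => /(_ hs); rewrite /C; lra.
  have h2 : `|s + s| <= d * k n.
    rewrite kS mulrA in hs.
    by rewrite (le_trans (ler_normD _ _)) //; lra.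
  have := IH _ h2.
  have hdk : d * k n <= d by rewrite -[leRHS]mulr1 ler_wpM2l // ltW.
  have := mc x0 (x0 + (s + s)).
  rewrite subrr normr0 ltW // addrAC subrr add0r => /(_ isT (le_trans h2 hdk)).
  have -> : (x0 + (x0 + (s + s))) / 2 = x0 + s.
    by field.
  by rewrite kS; nra.
have hdk n : d * k n <= d by rewrite -[leRHS]mulr1 ler_wpM2l // ltW.
have ab n s : `|s| <= d * k n -> `|f (x0 + s) - f x0| <= C * k n.
  move=> hs; rewrite ler_norml; apply/andP; split; last exact: up.
  have := up n (-s); rewrite normrN => /(_ hs).
  have hs' : `|s| <= d := le_trans hs (hdk n).
  have := mc (x0 + s) (x0 - s).
  rewrite addrAC subrr add0r addrAC subrr add0r normrN => /(_ hs' hs').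
  have -> : (x0 + s + (x0 - s)) / 2 = x0 by field.
  lra.
have hk n : k n * n.+1%:R <= 1.
  elim: n => [|n IH]; first by rewrite /k expr0 mul1r.
  rewrite kS -[n.+2]addn1 natrD.
  have : 1 <= n.+1%:R :> R by rewrite ler1n.
  have := k0 n.
  nra.
apply/cvgrPdist_le => e e0.
have [N hN] : exists N : nat, C / e < N.+1%:R.
  exists (Num.bound (C / e)).
  by rewrite (lt_le_trans (archi_boundP _)) ?ler_nat // divr_ge0 // ltW.
have hN' : C < e * N.+1%:R by rewrite -ltr_pdivrMl // mulrC.
apply/nbhs_ballP; exists (d * k N); first by rewrite /= mulr_gt0.
move=> t /= ht.
have := ab N (t - x0).
rewrite (addrC x0) subrK distrC.
move: ht; rewrite /ball_ /= distrC => ht.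
move=> /(_ (ltW ht)) h.
have := hk N; have := k0 N.
rewrite distrC; move: h; set a := `|_|; set K := k N; set m := N.+1%:R; move=> h p1 p2.
have : (e * m - C) * K >= 0 by rewrite mulr_ge0 ?(ltW p1) // subr_ge0 ltW.
have : e * (1 - K * m) >= 0 by rewrite mulr_ge0 ?(ltW e0) // subr_ge0.
nra.
Qed.
Lemma mu_cc (u v : R) : u <= v -> (l^* `[u, v]%classic)%mu = (v - u)%:E.
Proof.
move=> uv; have := lebesgue_measure_itv `[u, v].
rewrite /= lte_fin.
have -> : (l^* `[u, v]%classic)%mu = lebesgue_measure `[u, v]%classic by [].
move=> ->; case: ltgtP uv => // -> _.
by rewrite subrr.
Qed.
Lemma bound_near (f : R -> R) (a b x0 : R) :
  lebesgue_measurable_on `]a, b[ f ->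
  (forall u v, u \in `]a, b[ -> v \in `]a, b[ -> f ((u + v) / 2) <= 2^-1 * (f u + f v)) ->
  x0 \in `]a, b[ ->
  exists d, [/\ 0 < d, (forall y, `|y - x0| <= d -> y \in `]a, b[) &
     exists M, forall y, `|y - x0| <= d -> f y <= M].
Proof.
move=> mf mc; rewrite in_itv /= => /andP[ax xb].
set d := Num.min (x0 - a) (b - x0) / 4.
have d0 : 0 < d by rewrite divr_gt0 // lt_min !subr_gt0 ax xb.
have da : 4 * d <= x0 - a by rewrite /d mulrC divfK ?ge_min ?lexx // pnatr_eq0.
have db : 4 * d <= b - x0 by rewrite /d mulrC divfK ?ge_min ?lexx ?orbT // pnatr_eq0.
have inD y : `|y - x0| <= 2 * d -> y \in `]a, b[.
  by rewrite ler_norml in_itv /= => /andP[h1 h2]; apply/andP; split; lra.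
pose K := `[x0 - 2 * d, x0 + 2 * d]%classic : set R.
pose D := `]a, b[%classic : set R.
pose A n := K `&` (D `&` f @^-1` `]n%:R, +oo[%classic).
have mA n : measurable (A n : set (lebesgue_line R)).
  apply: measurableI; first by apply: sub_caratheodory; exact: measurable_itv.
  apply: mf; first by apply: sub_caratheodory; exact: measurable_itv.
  exact: measurable_itv.
have small : exists n, ((l^* (A n))%mu < d%:E)%E.
  have := @nonincreasing_cvg_mu _ (lebesgue_line R) R (@completed_lebesgue_measure R) A.
  have mK : ((l^* K)%mu < +oo)%E.
    by rewrite mu_cc ?ltry //; lra.
  have h0 : ((l^* (A 0%N))%mu < +oo)%E.
    by apply: le_lt_trans mK; apply: le_outer_measure; exact: subIsetl.
  move=> /(_ h0 mA (bigcapT_measurable mA)).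
  have nA : nonincreasing_seq A.
    move=> n m nm; apply/subsetPset => y [Ky [Dy /= fy]]; split => //; split => //.
    move: fy; rewrite /= !in_itv /= !andbT => fy.
    by apply: le_lt_trans fy; rewrite ler_nat.
  move=> /(_ nA).
  have -> : \bigcap_n A n = set0.
    apply/seteqP; split => // y Ay.
    have [_ [_ /=]] := Ay (Num.bound `|f y|) I.
    rewrite in_itv /= andbT => hy.
    have := archi_boundP (normr_ge0 (f y)); have := ler_norm (f y); lra.
  rewrite measure0 => /fine_cvgP [Hfin Hc].
  have Hl := cvgr_lt _ Hc _ d0.
  have [N _ HN] := filterI Hfin (Hl eventually_filter).
  exists N; have [/= fin lt] := HN N (leqnn N).
  by move: fin lt; rewrite /completed_lebesgue_measure /= => fin; rewrite -[X in (X < _)%E](fineK fin) lte_fin.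
have [n hn] := small.
exists d; split => //.
  by move=> y hy; apply: inD; lra.
exists n%:R => y hy; rewrite leNgt; apply/negP => fy.
have Ssub : `[y - d, y + d]%classic `<=` A n `|` [set z | A n (y + y - z)].
  move=> z /=; rewrite in_itv /= => /andP[z1 z2].
  move: hy; rewrite ler_norml => /andP[hy1 hy2].
  have Kz : K z by rewrite /K /= in_itv /=; apply/andP; split; lra.
  have Kz' : K (y + y - z) by rewrite /K /= in_itv /=; apply/andP; split; lra.
  have Dz : D z by apply: inD; rewrite ler_norml; apply/andP; split; lra.
  have Dz' : D (y + y - z) by apply: inD; rewrite ler_norml; apply/andP; split; lra.
  have := mc z (y + y - z) Dz Dz'.
  have -> : (z + (y + y - z)) / 2 = y by field.
  case: (ltP n%:R (f z)) => hz.
    by left; split => //; split => //=; rewrite in_itv /= andbT.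
  move=> hm; right; split => //; split => //=; rewrite in_itv /= andbT; lra.
have hle0 : ((l^* `[(y - d)%R, (y + d)%R]%classic)%mu <= (l^* (A n `|` [set z | A n (y + y - z)%R]))%mu)%E
  by apply: le_outer_measure.
rewrite mu_cc in hle0; last by lra.
have hU : ((l^* (A n `|` [set z | A n (y + y - z)%R]))%mu <= (l^* (A n))%mu + (l^* [set z | A n (y + y - z)%R]))%mu%E
  := outer_measureU2 _ _ _.
have hle := le_trans hle0 hU.
have hr := refl_le (y + y) (A n).
have : ((y + d - (y - d))%:E < (d + d)%:E)%E.
  apply: (le_lt_trans hle); rewrite EFinD.
  apply: (le_lt_trans (leeD2l _ hr)).
  by apply: lteD.
rewrite lte_fin; lra.
Qed.
End S.

Theorem theorem3p3 (R : realType) (h : R -> R) (a b : R) (f : R -> R) :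
  continuous h ->
  (forall x, 0 <= h x) ->
  (forall x y, h x * h y <= h (x * y)) ->
  (forall t, t <= h t) ->
  lebesgue_measurable_on `]a, b[ f ->
  h_midconvex h a b f ->
  forall x, x \in `]a, b[ -> {for x, continuous f}.
Proof.
move=> _ h0 hm ht mf hc x xab.
have h1 : h 1 = 1.
  have := hm 1 1; have := ht 1; rewrite mulr1; nra.
have hhalf : h 2^-1 = 2^-1.
  have := hm 2^-1 2; rewrite mulVf ?pnatr_eq0 // h1.
  have := ht 2; have := ht 2^-1; have := h0 2^-1; nra.
have mc u v : u \in `]a, b[ -> v \in `]a, b[ -> f ((u + v) / 2) <= 2^-1 * (f u + f v).
  by move=> hu hv; have := hc u v hu hv; rewrite hhalf.
have [d [d0 inD [M bd]]] := @bound_near R f a b x mf mc xab.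
apply: (@cont_of_bound R f x d M d0 _ bd).
by move=> u v hu hv; apply: mc; apply: inD.
Qed.
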